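(* Let $p\in(0,1)$ and let $Y_1,Y_2,\dots$ be i.i.d. with $Y_i=1-\mathrm{Geo}(p)$. Let $f(x)=(2-x)^{2-x}p(1-p)^{1-x}(1-x)^{x-1}$ for $x\le1$ (with $0^0=1$). (a) There is an absolute constant $C$ such that for every $a\in[2-p^{-1},1]$ and every positive integer $m$, $\Pr[Y_1+\dots+Y_m\ge am]\le Cmf(a)^m$. (b) As $m\to\infty$, uniformly for all $a\in[0,1]$, $\Pr[Y_1+\dots+Y_m\ge am]\ge[f(a)-o(1)]^m$. (c) If $p\ge1/2$, then as $m\to\infty$, uniformly for all $a\in[0,2-\frac1p]$, $\Pr[Y_1+\dots+Y_m\ge am]\ge[1-o(1)]^m$.
   Context: $\mathrm{Geo}(p)$ has $\Pr[\mathrm{Geo}(p)=k]=(1-p)^kp$ for integers $k\ge0$. *)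

(* Defs.v *)
From Stdlib Require Import Reals.
From Coquelicot Require Import Coquelicot.
Open Scope R_scope.

Definition geo_pmf (p : R) (k : nat) : R := (1 - p) ^ k * p.

Definition conv (u v : nat -> R) (n : nat) : R :=
  sum_f_R0 (fun i => u i * v (n - i)%nat) n.

(* law of G_1 + ... + G_m for G_i i.i.d. Geo(p) (m-fold convolution) *)
Fixpoint geo_sum_pmf (p : R) (m : nat) : nat -> R :=
  match m with
  | O => fun n => if Nat.eqb n 0 then 1 else 0
  | S m' => conv (geo_pmf p) (geo_sum_pmf p m')
  end.

(* Pr[Y_1 + ... + Y_m >= a m] where Y_i = 1 - G_i, so
   Y_1 + ... + Y_m = m - (G_1 + ... + G_m). *)
Definition prob_sumY_ge (p : R) (m : nat) (a : R) : R :=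
  Series (fun k => if Rle_dec (a * INR m) (INR m - INR k)
                   then geo_sum_pmf p m k else 0).

(* real power b^e for b >= 0, with the convention 0^0 = 1 *)
Definition rpow0 (b e : R) : R :=
  if Req_EM_T b 0 then (if Req_EM_T e 0 then 1 else 0) else Rpower b e.

Definition fgeo (p x : R) : R :=
  rpow0 (2 - x) (2 - x) * p * rpow0 (1 - p) (1 - x) * rpow0 (1 - x) (x - 1).

(* Main.v *)
Require Import Defs.
From Stdlib Require Import Reals Lra Lia.
From Coquelicot Require Import Coquelicot.
Open Scope R_scope.


Notation Cb := Binomial.C.

Lemma sum_rev (f : nat -> R) n :
  sum_f_R0 (fun i => f (n - i)%nat) n = sum_f_R0 f n.
Proof.
induction n as [|n IH]; [reflexivity|].
rewrite decomp_sum by lia. simpl pred.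
replace (sum_f_R0 (fun i : nat => f (S n - S i)%nat) n)
  with (sum_f_R0 (fun i : nat => f (n - i)%nat) n)
  by (apply sum_eq; intros; f_equal).
rewrite IH. simpl. ring.
Qed.

Lemma hockey m n :
  sum_f_R0 (fun j => Cb (j + m) j) n = Cb (n + m + 1) n.
Proof.
induction n as [|n IH].
- simpl. rewrite !C_n_0. reflexivity.
- simpl sum_f_R0. rewrite IH.
  replace (S (n + m))%nat with (n + m + 1)%nat by lia.
  rewrite (pascal (n + m + 1) n) by lia; f_equal; lia.
Qed.

Lemma conv_delta (u : nat -> R) k :
  conv u (fun n => if Nat.eqb n 0 then 1 else 0) k = u k.
Proof.
unfold conv. destruct k as [|k].
- simpl. apply Rmult_1_r.
- simpl sum_f_R0. rewrite sum_eq_R0.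
  + rewrite Nat.sub_diag. simpl. ring.
  + intros i Hi. cbv beta.
    match goal with |- context [if ?c then _ else _] => destruct c eqn:E end.
    * apply Nat.eqb_eq in E. destruct i; lia.
    * apply Rmult_0_r.
Qed.

Lemma geo_sum_closed p m k :
  geo_sum_pmf p (S m) k = Cb (k + m) k * p ^ (S m) * (1 - p) ^ k.
Proof.
revert k; induction m as [|m IH]; intro k.
- simpl geo_sum_pmf. rewrite conv_delta. unfold geo_pmf.
  rewrite Nat.add_0_r, C_n_n. ring.
- change (geo_sum_pmf p (S (S m)) k) with (conv (geo_pmf p) (geo_sum_pmf p (S m)) k).
  unfold conv.
  rewrite (sum_eq _ (fun i => Cb ((k - i) + m) (k - i) * (p ^ S (S m) * (1 - p) ^ k))).
  2:{ intros i Hi. rewrite IH. unfold geo_pmf.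
      assert (E: (1-p)^k = (1-p)^i * (1-p)^(k-i)) by (rewrite <- pow_add; f_equal; lia).
      rewrite E. simpl. ring. }
  rewrite <- scal_sum.
  rewrite (sum_rev (fun j => Cb (j + m) j)).
  rewrite hockey. replace (k + m + 1)%nat with (k + S m)%nat by lia. ring.
Qed.

Lemma geo_sum_nonneg p m k : 0 < p < 1 -> 0 <= geo_sum_pmf p m k.
Proof.
intro Hp. revert k; induction m as [|m IH]; intro k.
- simpl. destruct (Nat.eqb k 0); lra.
- simpl. unfold conv. apply cond_pos_sum. intro i.
  apply Rmult_le_pos; [|apply IH]. unfold geo_pmf.
  apply Rmult_le_pos; [apply pow_le|]; lra.
Qed.

Lemma geo_sum_0 p m : geo_sum_pmf p (S m) 0 = p ^ S m.
Proof. rewrite geo_sum_closed. rewrite C_n_0. simpl. ring. Qed.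

Lemma geo_series p x : 0 < p < 1 -> 0 <= x <= 1 ->
  is_series (fun k => geo_pmf p k * x ^ k) (p / (1 - (1 - p) * x)).
Proof.
intros Hp Hx.
assert (Hq : Rabs ((1 - p) * x) < 1).
{ rewrite Rabs_pos_eq by nra. nra. }
pose proof (is_series_scal_l p _ _ (is_series_geom _ Hq)) as H.
eapply is_series_ext; [|exact H].
intro n. unfold geo_pmf. simpl. unfold scal. simpl. unfold mult. simpl.
rewrite Rpow_mult_distr. ring.
Qed.

Lemma abs_ex (a : nat -> R) l : (forall n, 0 <= a n) -> is_series a l ->
  ex_series (fun n => Rabs (a n)).
Proof.
intros Ha H. apply ex_series_ext with a.
- intro n. rewrite Rabs_pos_eq; auto.
- exists l; exact H.
Qed.

Lemma gen_series p m x : 0 < p < 1 -> 0 <= x <= 1 ->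
  is_series (fun k => geo_sum_pmf p (S m) k * x ^ k) ((p / (1 - (1 - p) * x)) ^ (S m)).
Proof.
intros Hp Hx. induction m as [|m IH].
- eapply is_series_ext; [|rewrite pow_1; apply geo_series; auto].
  intro n. simpl geo_sum_pmf. rewrite conv_delta. reflexivity.
- pose proof (geo_series p x Hp Hx) as G.
  assert (Hg : forall n, 0 <= geo_pmf p n * x ^ n).
  { intro n. unfold geo_pmf. apply Rmult_le_pos; [apply Rmult_le_pos; [apply pow_le|]|apply pow_le]; lra. }
  assert (Hs : forall n, 0 <= geo_sum_pmf p (S m) n * x ^ n).
  { intro n. apply Rmult_le_pos; [apply geo_sum_nonneg; auto|apply pow_le; lra]. }
  pose proof (is_series_mult _ _ _ _ G IH (abs_ex _ _ Hg G) (abs_ex _ _ Hs IH)) as H.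
  replace ((p / (1 - (1 - p) * x)) ^ S (S m)) with
    (p / (1 - (1 - p) * x) * (p / (1 - (1 - p) * x)) ^ S m) by (simpl; ring).
  eapply is_series_ext; [|exact H].
  intro n. change (geo_sum_pmf p (S (S m)) n) with (conv (geo_pmf p) (geo_sum_pmf p (S m)) n).
  unfold conv. rewrite Rmult_comm, scal_sum. apply sum_eq. intros i Hi.
  assert (E: x^n = x^i * x^(n-i)) by (rewrite <- pow_add; f_equal; lia).
  rewrite E. ring.
Qed.

Lemma gen_series1 p m : 0 < p < 1 ->
  is_series (fun k => geo_sum_pmf p (S m) k) 1.
Proof.
intro Hp. pose proof (gen_series p m 1 Hp ltac:(lra)) as H.
replace (p / (1 - (1 - p) * 1)) with 1 in H by (field; lra).
rewrite pow1 in H. eapply is_series_ext; [|exact H]. intro n. simpl. rewrite (pow1 n). apply Rmult_1_r.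
Qed.

Lemma term_le_series (a : nat -> R) k : (forall n, 0 <= a n) -> ex_series a ->
  a k <= Series a.
Proof.
intros Ha Hex. rewrite (Series_incr_n a (S k)) by (auto; lia). simpl pred.
assert (H1 : a k <= sum_f_R0 a k).
{ destruct k. simpl; lra. simpl. assert (0 <= sum_f_R0 a k) by (apply cond_pos_sum; auto). lra. }
assert (H2 : 0 <= Series (fun j => a (S k + j)%nat)).
{ replace 0 with (Series (fun j => 0 * a j)).
  - apply Series_le.
    + intro n. split; [lra|]. rewrite Rmult_0_l. apply Ha.
    + apply ex_series_incr_n with (n := S k) in Hex. exact Hex.
  - rewrite Series_scal_l. ring. }
lra.
Qed.

Section MaxTerm.
Variables n k : nat.
Hypothesis Hkn : (k < n)%nat.
Let x := INR k.
Let y := INR (n - k).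
Let T j := Cb n j * x ^ j * y ^ (n - j).

Lemma T_nonneg j : 0 <= T j.
Proof.
unfold T, Binomial.C. apply Rmult_le_pos; [apply Rmult_le_pos|]; try apply pow_le; try apply pos_INR.
apply Rmult_le_pos; [apply pos_INR|]. apply Rlt_le, Rinv_0_lt_compat.
apply Rmult_lt_0_compat; apply INR_fact_lt_0.
Qed.

Lemma T_ratio j : (j < n)%nat -> T (S j) * INR (S j) * y = T j * INR (n - j) * x.
Proof.
intro Hj. unfold T. rewrite pascal_step3 by auto.
replace (n - j)%nat with (S (n - S j)) by lia. simpl pow.
replace (S (n - S j)) with (n - j)%nat by lia.
assert (INR (S j) <> 0) by (apply not_0_INR; lia).
field; auto.
Qed.

Lemma T_up d : (d <= k)%nat -> T (k - d) <= T k.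
Proof.
induction d as [|d IH]; intro Hd.
- rewrite Nat.sub_0_r. lra.
- assert (H1 : T (k - S d) <= T (k - d)).
  { pose proof (T_ratio (k - S d) ltac:(lia)) as R.
    replace (S (k - S d)) with (k - d)%nat in R by lia.
    pose proof (T_nonneg (k - S d)). pose proof (T_nonneg (k - d)).
    assert (Hy : 0 < y) by (unfold y; apply lt_0_INR; lia).
    assert (Hc : INR (S (k - S d)) * y <= INR (n - (k - S d)) * x).
    { unfold y, x. rewrite <- !mult_INR. apply le_INR. nia. }
    replace (S (k - S d)) with (k - d)%nat in Hc by lia.
    assert (Hp : 0 < INR (k - d) * y) by (apply Rmult_lt_0_compat; auto; apply lt_0_INR; lia).
    nra. }
  specialize (IH ltac:(lia)). lra.
Qed.

Lemma T_down d : (k + d <= n)%nat -> T (k + d) <= T k.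
Proof.
induction d as [|d IH]; intro Hd.
- rewrite Nat.add_0_r. lra.
- assert (H1 : T (k + S d) <= T (k + d)).
  { pose proof (T_ratio (k + d) ltac:(lia)) as R.
    replace (S (k + d)) with (k + S d)%nat in R by lia.
    pose proof (T_nonneg (k + S d)). pose proof (T_nonneg (k + d)).
    assert (Hy : 0 < y) by (unfold y; apply lt_0_INR; lia).
    assert (Hc : INR (n - (k + d)) * x <= INR (k + S d) * y).
    { unfold y, x. rewrite <- !mult_INR. apply le_INR. nia. }
    assert (Hp : 0 < INR (k + S d) * y) by (apply Rmult_lt_0_compat; auto; apply lt_0_INR; lia).
    nra. }
  specialize (IH ltac:(lia)). lra.
Qed.

Lemma maxterm : INR n ^ n <= INR (S n) * (Cb n k * INR k ^ k * INR (n - k) ^ (n - k)).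
Proof.
replace (INR n) with (x + y) at 1 by (unfold x, y; rewrite <- plus_INR; f_equal; lia).
rewrite binomial.
change (Cb n k * INR k ^ k * INR (n - k) ^ (n - k)) with (T k).
rewrite Rmult_comm, <- sum_cte.
apply sum_Rle. intros j Hj. change (Cb n j * x ^ j * y ^ (n - j)) with (T j).
destruct (Compare_dec.le_lt_dec j k).
- replace j with (k - (k - j))%nat by lia. apply T_up. lia.
- replace j with (k + (j - k))%nat by lia. apply T_down. lia.
Qed.
End MaxTerm.

Definition Phi (p t : R) : R :=
  (1 + t) * ln (1 + t) - t * ln t + ln p + t * ln (1 - p).

Lemma exp_mono x y : x <= y -> exp x <= exp y.
Proof. intro H. destruct (Rle_lt_or_eq_dec _ _ H) as [H'|H']. - left; apply exp_increasing; auto. - subst; lra. Qed.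

Lemma exp_pow_n x n : exp x ^ n = exp (INR n * x).
Proof.
induction n as [|n IH]. - simpl. rewrite Rmult_0_l, exp_0. reflexivity.
- rewrite S_INR. simpl pow. rewrite IH, <- exp_plus. f_equal. ring.
Qed.

Lemma powself k : INR k ^ k = exp (INR k * ln (INR k)).
Proof.
destruct k as [|k].
- simpl. rewrite Rmult_0_l, exp_0. reflexivity.
- rewrite <- ln_pow by (apply lt_0_INR; lia). rewrite exp_ln. reflexivity.
  apply pow_lt. apply lt_0_INR; lia.
Qed.

Lemma pow_exp_ln x n : 0 < x -> x ^ n = exp (INR n * ln x).
Proof. intro H. rewrite <- ln_pow by auto. rewrite exp_ln; auto. apply pow_lt; auto. Qed.

Lemma binom_shift k m :
  Cb (k + m) k * INR (k + S m) = Cb (k + S m) k * INR (S m).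
Proof.
unfold Binomial.C.
replace (k + m - k)%nat with m by lia.
replace (k + S m - k)%nat with (S m) by lia.
replace (k + S m)%nat with (S (k + m)) by lia.
change (Factorial.fact (S (k + m))) with (S (k + m) * Factorial.fact (k + m))%nat.
change (Factorial.fact (S m)) with (S m * Factorial.fact m)%nat.
rewrite !mult_INR.
pose proof (INR_fact_lt_0 k). pose proof (INR_fact_lt_0 m). pose proof (INR_fact_lt_0 (k + m)).
assert (INR (S m) <> 0) by (apply not_0_INR; lia).
field. repeat split; lra.
Qed.

Lemma geo_lb p m' k : 0 < p < 1 -> (k <= S m')%nat ->
  exp (INR (S m') * Phi p (INR k / INR (S m')) - ln 6 - ln (INR (S m')))
  <= geo_sum_pmf p (S m') k.
Proof.
intros Hp Hk. rewrite geo_sum_closed. set (m := S m').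
set (n := (k + m)%nat).
pose proof (binom_shift k m') as Hb. fold m in Hb. fold n in Hb.
pose proof (maxterm n k ltac:(unfold n, m; lia)) as Hmx.
replace (n - k)%nat with m in Hmx by (unfold n; lia).
assert (HM : 1 <= INR m) by (apply (le_INR 1); unfold m; lia).
assert (HN : INR n = INR k + INR m) by (unfold n; apply plus_INR).
assert (HK : 0 <= INR k) by apply pos_INR.
assert (HKm : INR k <= INR m) by (apply le_INR; auto).
assert (Hexp : INR m * Phi p (INR k / INR m) - ln 6 - ln (INR m) =
   (INR n * ln (INR n) - INR k * ln (INR k) - INR m * ln (INR m)
    + INR m * ln p + INR k * ln (1 - p)) + (- ln (6 * INR m))).
{ unfold Phi. rewrite ln_mult by lra.
  replace (1 + INR k / INR m) with (INR n / INR m) by (rewrite HN; field; lra).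
  rewrite ln_div by lra.
  destruct (Req_dec (INR k) 0) as [Z|Z].
  - rewrite Z. unfold Rdiv. rewrite Rmult_0_l.
    replace (INR n) with (INR m) by lra. ring.
  - rewrite ln_div by lra. rewrite HN. field. lra. }
rewrite Hexp.
match goal with |- exp (?a - ?d - ?e + ?b + ?c + - ?f) <= _ =>
  replace (a - d - e + b + c + - f) with (a + b + c + (- (d + e)) + (- f)) by ring end.
rewrite !exp_plus, !exp_Ropp, exp_ln by lra.
rewrite exp_plus.
rewrite <- (powself n), <- (powself k), <- (powself m).
rewrite <- (pow_exp_ln p m) by lra. rewrite <- (pow_exp_ln (1 - p) k) by lra.
set (P := p ^ m). set (Q := (1 - p) ^ k).
assert (HP : 0 < P) by (apply pow_lt; lra).
assert (HQ : 0 < Q) by (apply pow_lt; lra).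
assert (HKk : 0 < INR k ^ k).
{ destruct k. simpl; lra. apply pow_lt. apply lt_0_INR; lia. }
assert (HMm : 0 < INR m ^ m) by (apply pow_lt; lra).
rewrite S_INR in Hmx.
set (Cp := Cb (k + m') k) in *. set (Cn := Cb n k) in *.
set (Nn := INR n ^ n) in *.
assert (HCp : Cp = Cn * INR m / INR n) by (rewrite <- Hb; field; lra).
rewrite HCp.
assert (Hden : 0 < INR k ^ k * INR m ^ m) by (apply Rmult_lt_0_compat; auto).
assert (H1 : Nn <= (INR n + 1) * Cn * (INR k ^ k * INR m ^ m)) by nra.
assert (H2 : (INR n + 1) * INR n <= 6 * INR m * INR m) by nra.
assert (HCn : 0 <= Cn).
{ unfold Cn, Binomial.C. apply Rmult_le_pos; [apply pos_INR|]. apply Rlt_le, Rinv_0_lt_compat.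
  apply Rmult_lt_0_compat; apply INR_fact_lt_0. }
apply Rle_trans with (((INR n + 1) * Cn * (INR k ^ k * INR m ^ m)) * P * Q /
   (INR k ^ k * INR m ^ m) / (6 * INR m)).
- unfold Rdiv. 
  match goal with |- ?l <= _ => replace l with (Nn * P * Q * / (INR k ^ k * INR m ^ m) * / (6 * INR m)) by (field; repeat split; lra) end.
  apply Rmult_le_compat_r; [apply Rlt_le, Rinv_0_lt_compat; lra|].
  apply Rmult_le_compat_r; [apply Rlt_le, Rinv_0_lt_compat; lra|].
  apply Rmult_le_compat_r; [lra|]. apply Rmult_le_compat_r; lra.
- replace (((INR n + 1) * Cn * (INR k ^ k * INR m ^ m)) * P * Q /
   (INR k ^ k * INR m ^ m) / (6 * INR m)) with ((INR n + 1) * Cn * P * Q / (6 * INR m))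
   by (field; lra).
  apply Rmult_le_reg_r with (6 * INR m * INR n); [nra|].
  replace (Cn * INR m / INR n * P * Q * (6 * INR m * INR n)) with (Cn * P * Q * (6 * INR m * INR m)) by (field; lra).
  replace ((INR n + 1) * Cn * P * Q / (6 * INR m) * (6 * INR m * INR n)) with (Cn * P * Q * ((INR n + 1) * INR n)) by (field; lra).
  apply Rmult_le_compat_l; [|lra].
  apply Rmult_le_pos; [apply Rmult_le_pos|]; lra.
Qed.

Lemma exp_ge1 y : 1 + y <= exp y.
Proof. destruct (Req_dec y 0) as [->|H]. rewrite exp_0; lra. left; apply exp_ineq1; auto. Qed.

Lemma ln_le_sub1 x : 0 < x -> ln x <= x - 1.
Proof. intro H. pose proof (exp_ge1 (ln x)). rewrite exp_ln in H0; lra. Qed.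

Lemma ln_nonneg x : 1 <= x -> 0 <= ln x.
Proof. intro H. rewrite <- ln_1. apply ln_le; lra. Qed.

Lemma ln_nonpos x : 0 < x -> x <= 1 -> ln x <= 0.
Proof. intros H H1. rewrite <- ln_1. apply ln_le; lra. Qed.

Lemma small_blnb M b : 1 <= M -> 0 < b -> b <= / M -> - (b * ln b) <= (1 + ln M) / M.
Proof.
intros HM Hb HbM.
assert (E : ln b = ln (M * b) - ln M) by (rewrite ln_mult by lra; ring).
pose proof (ln_le_sub1 (M * b) ltac:(nra)) as H1.
assert (HMb : M * b <= 1) by (apply Rmult_le_reg_l with (/ M); [apply Rinv_0_lt_compat; lra|];
   rewrite <- Rmult_assoc, Rinv_l, Rmult_1_l, Rmult_1_r by lra; lra).
pose proof (ln_nonneg M HM).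
assert (HbM' : b * M <= 1) by lra.
rewrite E.
apply Rmult_le_reg_r with M; [lra|].
unfold Rdiv. rewrite Rmult_assoc, Rinv_l, Rmult_1_r by lra.
assert (- (M * b) * ln (M * b) <= 1).
{ assert (-ln (M*b) <= / (M*b) - 1).
  { rewrite <- ln_Rinv by nra. apply ln_le_sub1. apply Rinv_0_lt_compat; nra. }
  assert (0 < M * b) by nra.
  replace 1 with ((M*b) * / (M*b)) by (field; lra). nra. }
nra.
Qed.

Lemma Phi_cont p M b c : 0 < p < 1 -> 1 <= M -> 0 <= c -> c <= b -> b <= 1 -> b - c <= / M ->
  M * (Phi p b - Phi p c) <= 3 + ln M.
Proof.
intros Hp HM Hc Hcb Hb1 Hd.
pose proof (ln_nonneg M HM) as HlnM.
assert (HiM : 0 < / M <= 1) by (split; [apply Rinv_0_lt_compat; lra|]; rewrite <- Rinv_1; apply Rinv_le_contravar; lra).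
unfold Phi.
assert (Hi : (1 + b) * ln (1 + b) - (1 + c) * ln (1 + c) <= 2 * (b - c)).
{ pose proof (ln_le_sub1 (1 + b) ltac:(lra)).
  assert (ln (1 + b) - ln (1 + c) <= (b - c) / (1 + c)).
  { rewrite <- ln_div by lra. eapply Rle_trans; [apply ln_le_sub1; apply Rdiv_lt_0_compat; lra|].
    right. field. lra. }
  assert ((1 + c) * (ln (1 + b) - ln (1 + c)) <= b - c).
  { apply Rle_trans with ((1 + c) * ((b - c) / (1 + c))). apply Rmult_le_compat_l; lra. right; field; lra. }
  nra. }
assert (Hii : c * ln c - b * ln b <= (1 + ln M) / M).
{ assert (HposR : 0 <= (1 + ln M) / M) by (apply Rdiv_le_0_compat; lra).
  destruct (Req_dec b 0) as [Hb0|Hb0].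
  { assert (c = 0) by lra. subst. rewrite !Rmult_0_l. lra. }
  assert (Hbp : 0 < b) by lra.
  pose proof (ln_nonpos b Hbp Hb1) as Hlnb.
  destruct (Req_dec c 0) as [Hc0|Hc0].
  { subst c. rewrite Rmult_0_l. pose proof (small_blnb M b HM Hbp ltac:(lra)). lra. }
  assert (Hcp : 0 < c) by lra.
  assert (Hlncb : ln c <= ln b) by (apply ln_le; lra).
  assert (E : c * ln c - b * ln b = c * (ln c - ln b) + (b - c) * (- ln b)) by ring.
  rewrite E.
  assert (c * (ln c - ln b) <= 0) by nra.
  destruct (Rle_lt_dec (/ M) b) as [Hbig|Hsmall].
  - assert (- ln b <= ln M).
    { assert (ln (/ M) <= ln b) by (apply ln_le; lra). rewrite ln_Rinv in H0 by lra. lra. }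
    assert ((b - c) * (- ln b) <= / M * ln M) by nra.
    unfold Rdiv. nra.
  - pose proof (small_blnb M b HM Hbp ltac:(lra)). nra. }
assert (Hiii : (b - c) * ln (1 - p) <= 0).
{ pose proof (ln_nonpos (1 - p) ltac:(lra) ltac:(lra)). nra. }
assert (Htot : (1 + b) * ln (1 + b) - b * ln b + ln p + b * ln (1 - p) -
  ((1 + c) * ln (1 + c) - c * ln c + ln p + c * ln (1 - p)) <= 2 * / M + (1 + ln M) / M) by nra.
apply Rle_trans with (M * (2 * / M + (1 + ln M) / M)).
- apply Rmult_le_compat_l; lra.
- right. field. lra.
Qed.

Definition hseq p m a := fun k => if Rle_dec (a * INR m) (INR m - INR k)
                   then geo_sum_pmf p m k else 0.

Lemma hseq_nonneg p m a k : 0 < p < 1 -> 0 <= hseq p m a k.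
Proof. intro Hp. unfold hseq. destruct Rle_dec; [apply geo_sum_nonneg; auto|lra]. Qed.

Lemma hseq_ex p m' a : 0 < p < 1 -> ex_series (hseq p (S m') a).
Proof.
intro Hp. apply (@ex_series_le R_AbsRing R_CompleteNormedModule) with (b := geo_sum_pmf p (S m')).
- intro n. change (norm (hseq p (S m') a n)) with (Rabs (hseq p (S m') a n)).
  rewrite Rabs_pos_eq by (apply hseq_nonneg; auto).
  unfold hseq. destruct Rle_dec; [lra|apply geo_sum_nonneg; auto].
- exists 1. apply gen_series1; auto.
Qed.

Lemma prob_term p m' a k : 0 < p < 1 -> INR k <= (1 - a) * INR (S m') ->
  geo_sum_pmf p (S m') k <= prob_sumY_ge p (S m') a.
Proof.
intros Hp Hk. unfold prob_sumY_ge. fold (hseq p (S m') a).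
apply Rle_trans with (hseq p (S m') a k).
- unfold hseq. destruct Rle_dec; [lra|]. exfalso. apply n. lra.
- apply term_le_series; [intro; apply hseq_nonneg; auto|apply hseq_ex; auto].
Qed.

Lemma prob_ge_pm p m' a : 0 < p < 1 -> a <= 1 -> p ^ S m' <= prob_sumY_ge p (S m') a.
Proof.
intros Hp Ha. rewrite <- geo_sum_0. apply prob_term; auto.
simpl INR at 1. pose proof (pos_INR (S m')). nra.
Qed.

Definition ell (m : nat) := ln 6 + 3 + 2 * ln (INR m).

Lemma prob_lb p m' a b : 0 < p < 1 -> 0 <= b <= 1 -> b <= 1 - a ->
  exp (Phi p b) ^ S m' * exp (- ell (S m')) <= prob_sumY_ge p (S m') a.
Proof.
intros Hp Hb Hba. set (m := S m').
assert (HM : 1 <= INR m) by (apply (le_INR 1); unfold m; lia).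
destruct (nfloor_ex (b * INR m) ltac:(nra)) as [k [Hk1 Hk2]].
assert (Hkm : (k <= m)%nat) by (apply INR_le; nra).
eapply Rle_trans; [|apply (prob_term p m' a k Hp); fold m; nra].
eapply Rle_trans; [|apply geo_lb; auto].
fold m.
rewrite exp_pow_n, <- exp_plus. apply exp_mono.
pose proof (Phi_cont p (INR m) b (INR k / INR m) Hp HM) as Hc.
assert (H0 : 0 <= INR k / INR m) by (apply Rdiv_le_0_compat; [apply pos_INR|lra]).
assert (H1 : INR k / INR m <= b).
{ apply Rmult_le_reg_r with (INR m); [lra|]. unfold Rdiv. rewrite Rmult_assoc, Rinv_l, Rmult_1_r; lra. }
assert (H2 : b - INR k / INR m <= / INR m).
{ apply Rmult_le_reg_r with (INR m); [lra|]. unfold Rdiv.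
  rewrite Rmult_minus_distr_r, Rmult_assoc, !Rinv_l, Rmult_1_r; lra. }
specialize (Hc H0 H1 (proj2 Hb) H2).
unfold ell. lra.
Qed.

Lemma Phi_0 p : Phi p 0 = ln p.
Proof. unfold Phi. rewrite Rplus_0_r, ln_1. ring. Qed.

Lemma chernoff p m' a : 0 < p < 1 -> 2 - / p <= a <= 1 ->
  prob_sumY_ge p (S m') a <= exp (Phi p (1 - a)) ^ S m'.
Proof.
intros Hp Ha. set (m := S m'). set (b := 1 - a).
assert (Hpinv : p * / p = 1) by (field; lra).
assert (Hb : 0 <= b) by (unfold b; lra).
assert (Hbp : b * p <= 1 - p) by (unfold b; nra).
destruct (Req_dec b 0) as [Hb0|Hb0].
-
  rewrite Hb0, Phi_0, exp_ln by lra.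
  unfold prob_sumY_ge. fold (hseq p m a).
  rewrite Series_incr_1 by (apply hseq_ex; auto).
  rewrite (Series_ext _ (fun n => 0 * hseq p m a n)).
  + rewrite Series_scal_l, Rmult_0_l, Rplus_0_r.
    unfold hseq. destruct Rle_dec; [|pose proof (pow_le p m); lra].
    unfold m. rewrite geo_sum_0. lra.
  + intro n. rewrite Rmult_0_l. unfold hseq. destruct Rle_dec as [r|]; [|reflexivity].
    exfalso. rewrite S_INR in r. pose proof (pos_INR n). unfold b in Hb0. nra.
- assert (Hbpos : 0 < b) by lra.
  set (x := b / ((1 + b) * (1 - p))).
  assert (Hx0 : 0 < x) by (unfold x; apply Rdiv_lt_0_compat; nra).
  assert (Hx1 : x <= 1).
  { unfold x. apply Rmult_le_reg_r with ((1 + b) * (1 - p)); [nra|].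
    unfold Rdiv. rewrite Rmult_assoc, Rinv_l by nra. nra. }
  pose proof (gen_series p m' x Hp ltac:(lra)) as G. fold m in G.
  set (L := exp (- (b * INR m * ln x))).
  assert (GL : is_series (fun k => L * (geo_sum_pmf p m k * x ^ k))
        (L * (p / (1 - (1 - p) * x)) ^ m)).
  { pose proof (is_series_scal_l L _ _ G) as G2. exact G2. }
  unfold prob_sumY_ge. fold (hseq p m a).
  eapply Rle_trans.
  + apply (Series_le _ (fun k => L * (geo_sum_pmf p m k * x ^ k))).
    * intro k. split; [apply hseq_nonneg; auto|].
      unfold hseq. destruct Rle_dec as [r|r].
      -- rewrite (pow_exp_ln x k Hx0). unfold L.
         rewrite Rmult_comm, Rmult_assoc, <- exp_plus.
         assert (HS : 0 <= geo_sum_pmf p m k) by (apply geo_sum_nonneg; auto).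
         assert (1 <= exp (INR k * ln x + - (b * INR m * ln x))).
         { pose proof (ln_nonpos x Hx0 Hx1). pose proof (exp_ge1 (INR k * ln x + - (b * INR m * ln x))).
           unfold b in *. nra. }
         nra.
      -- apply Rmult_le_pos; [unfold L; left; apply exp_pos|].
         apply Rmult_le_pos; [apply geo_sum_nonneg; auto|apply pow_le; lra].
    * exists (L * (p / (1 - (1 - p) * x)) ^ m). exact GL.
  + rewrite (is_series_unique _ _ GL).
    replace (p / (1 - (1 - p) * x)) with (p * (1 + b)) by (unfold x; field; split; lra).
    rewrite exp_pow_n. unfold L.
    rewrite (pow_exp_ln (p * (1 + b)) m) by nra.
    rewrite <- exp_plus. apply exp_mono. right.
    unfold x. rewrite ln_div by nra. rewrite !ln_mult by lra.
    fold b. unfold Phi. ring.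
Qed.

Lemma fgeo_eq p a : 0 < p < 1 -> a <= 1 -> fgeo p a = exp (Phi p (1 - a)).
Proof.
intros Hp Ha. unfold fgeo, rpow0, Phi.
replace (1 + (1 - a)) with (2 - a) by ring.
destruct (Req_EM_T (2 - a) 0) as [E|_]; [lra|].
destruct (Req_EM_T (1 - p) 0) as [E|_]; [lra|].
unfold Rpower.
destruct (Req_EM_T (1 - a) 0) as [E|E].
- destruct (Req_EM_T (a - 1) 0) as [_|E2]; [|lra].
  rewrite E. rewrite Rmult_0_l, !Rmult_0_l, Rminus_0_r, Rplus_0_r.
  rewrite exp_plus. rewrite exp_ln by lra. rewrite exp_0. ring.
- replace (a - 1) with (- (1 - a)) by ring.
  rewrite <- (exp_ln p) at 1 by lra.
  rewrite <- !exp_plus. f_equal. ring.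
Qed.

Lemma Phi_le3 p b : 0 < p < 1 -> 0 <= b <= 1 -> Phi p b <= 3.
Proof.
intros Hp Hb. unfold Phi.
pose proof (ln_le_sub1 (1 + b) ltac:(lra)).
pose proof (ln_nonneg (1 + b) ltac:(lra)).
pose proof (ln_nonpos p ltac:(lra) ltac:(lra)).
pose proof (ln_nonpos (1 - p) ltac:(lra) ltac:(lra)).
assert (- (b * ln b) <= 1).
{ destruct (Req_dec b 0) as [->|Hb0]. rewrite Rmult_0_l; lra.
  assert (- ln b <= / b - 1) by (rewrite <- ln_Rinv by lra; apply ln_le_sub1; apply Rinv_0_lt_compat; lra).
  assert (b * / b = 1) by (field; lra). nra. }
nra.
Qed.

Lemma Phi_mean p : 0 < p < 1 -> Phi p (/ p - 1) = 0.
Proof.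
intro Hp. unfold Phi. replace (1 + (/ p - 1)) with (/ p) by ring.
replace (/ p - 1) with ((1 - p) / p) by (field; lra).
rewrite ln_Rinv, ln_div by lra. field. lra.
Qed.

Lemma ln_le_sqrt x : 1 <= x -> ln x <= 2 * sqrt x.
Proof.
intro H. assert (Hs : 0 < sqrt x) by (apply sqrt_lt_R0; lra).
rewrite <- (sqrt_sqrt x) at 1 by lra. rewrite ln_mult by lra.
pose proof (ln_le_sub1 _ Hs). lra.
Qed.

Lemma eps_cv K : 0 <= K -> Un_cv (fun m => K * ell m / INR m) 0.
Proof.
intros HK e He.
destruct (INR_archimed (e * e) ((12 * (K + 1)) ^ 2) ltac:(nra)) as [N HN].
exists (S N). intros n Hn. unfold R_dist. rewrite Rminus_0_r.
assert (Hn1 : 1 <= INR n) by (apply (le_INR 1); lia).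
assert (HnN : INR N < INR n) by (apply lt_INR; lia).
set (s := sqrt (INR n)).
assert (Hs : 1 <= s) by (unfold s; rewrite <- sqrt_1; apply sqrt_le_1_alt; lra).
assert (Hss : s * s = INR n) by (apply sqrt_sqrt; lra).
pose proof (ln_le_sqrt _ Hn1) as Hl. fold s in Hl.
assert (Hl6 : ln 6 <= 5) by (pose proof (ln_le_sub1 6); lra).
assert (Hl0 : 0 <= ln (INR n)) by (apply ln_nonneg; auto).
assert (Hl60 : 0 <= ln 6) by (apply ln_nonneg; lra).
unfold ell. rewrite Rabs_pos_eq.
2:{ apply Rdiv_le_0_compat; [|lra]. apply Rmult_le_pos; lra. }
assert (Hb : K * (ln 6 + 3 + 2 * ln (INR n)) <= (K + 1) * (12 * s)) by nra.
apply Rle_lt_trans with ((K + 1) * (12 * s) / INR n).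
- apply Rmult_le_compat_r; [left; apply Rinv_0_lt_compat; lra|lra].
- rewrite <- Hss. replace ((K + 1) * (12 * s) / (s * s)) with (12 * (K + 1) / s) by (field; lra).
  apply Rmult_lt_reg_r with s; [lra|].
  replace (12 * (K + 1) / s * s) with (12 * (K + 1)) by (field; lra).
  (* (12(K+1))^2 < N e^2 < n e^2 = (s e)^2 *)
  assert (H1 : (12 * (K + 1)) ^ 2 < (e * s) ^ 2).
  { replace ((e * s) ^ 2) with (e * e * (s * s)) by ring. rewrite Hss. nra. }
  assert (0 < e * s) by nra.
  assert (0 < 12 * (K + 1)) by lra.
  nra.
Qed.

Lemma final_step F K q Pr m l : (0 < m)%nat -> 0 < F <= K -> 0 < q -> q ^ m <= Pr ->
  F ^ m * exp (- l) <= Pr -> 0 <= l -> K * l / INR m <= q ->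
  (F - K * l / INR m) ^ m <= Pr.
Proof.
intros Hm HF Hq Hqm HFm Hl Heps.
assert (HM : 0 < INR m) by (apply lt_0_INR; auto).
set (t := l / INR m).
assert (Ht : 0 <= t) by (unfold t; apply Rdiv_le_0_compat; lra).
replace (K * l / INR m) with (K * t) in * by (unfold t; field; lra).
destruct (Rle_lt_dec (F - K * t) 0) as [Hneg|Hpos].
- eapply Rle_trans; [apply Rle_abs|]. rewrite <- RPow_abs.
  eapply Rle_trans; [|apply Hqm]. apply pow_incr. split; [apply Rabs_pos|].
  rewrite Rabs_left1 by lra. nra.
- assert (H1 : F - K * t <= F * (1 - t)) by nra.
  assert (H2 : 0 <= 1 - t) by nra.
  eapply Rle_trans; [apply pow_incr; split; [lra|exact H1]|].
  rewrite Rpow_mult_distr.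
  eapply Rle_trans; [|apply HFm]. apply Rmult_le_compat_l; [apply pow_le; lra|].
  apply Rle_trans with (exp (- t) ^ m).
  + apply pow_incr. split; auto. pose proof (exp_ge1 (- t)). lra.
  + rewrite exp_pow_n. right. f_equal. unfold t. field. lra.
Qed.

Lemma ell_nonneg m : (0 < m)%nat -> 0 <= ell m.
Proof.
intro H. unfold ell. assert (0 <= ln 6) by (apply ln_nonneg; lra).
assert (0 <= ln (INR m)) by (apply ln_nonneg; apply (le_INR 1); lia). lra.
Qed.

Theorem lemma13 :
  (exists C : R, forall p : R, 0 < p < 1 ->
     forall a : R, 2 - / p <= a <= 1 ->
     forall m : nat, (1 <= m)%nat ->
       prob_sumY_ge p m a <= C * INR m * fgeo p a ^ m)
  /\
  (forall p : R, 0 < p < 1 ->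
     exists eps : nat -> R, Un_cv eps 0 /\
       exists M : nat, forall m : nat, (M <= m)%nat ->
         forall a : R, 0 <= a <= 1 ->
           (fgeo p a - eps m) ^ m <= prob_sumY_ge p m a)
  /\
  (forall p : R, 1 / 2 <= p < 1 ->
     exists eps : nat -> R, Un_cv eps 0 /\
       exists M : nat, forall m : nat, (M <= m)%nat ->
         forall a : R, 0 <= a <= 2 - / p ->
           (1 - eps m) ^ m <= prob_sumY_ge p m a).
Proof.
split; [|split].
- exists 1. intros p Hp a Ha m Hm.
  destruct m as [|m']; [lia|].
  rewrite fgeo_eq by (auto; lra).
  eapply Rle_trans; [apply chernoff; auto|].
  assert (H1 : 1 <= INR (S m')) by (apply (le_INR 1); lia).
  assert (0 <= exp (Phi p (1 - a)) ^ S m') by (apply pow_le; left; apply exp_pos).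
  nra.
- intros p Hp. exists (fun m => exp 3 * ell m / INR m).
  pose proof (eps_cv (exp 3) ltac:(left; apply exp_pos)) as Hcv.
  split; [exact Hcv|].
  destruct (Hcv p ltac:(lra)) as [N HN].
  exists (Nat.max N 1). intros m Hm a Ha.
  specialize (HN m ltac:(lia)). unfold R_dist in HN. rewrite Rminus_0_r in HN.
  pose proof (Rle_abs (exp 3 * ell m / INR m)) as HA.
  destruct m as [|m']; [lia|].
  rewrite fgeo_eq by (auto; lra).
  apply final_step with (q := p); auto; try lia; try lra.
  + split; [apply exp_pos|]. apply exp_mono. apply Phi_le3; auto; lra.
  + apply prob_ge_pm; auto; lra.
  + apply prob_lb; auto; lra.
  + apply ell_nonneg; lia.
- intros p Hp. exists (fun m => 1 * ell m / INR m).
  pose proof (eps_cv 1 ltac:(lra)) as Hcv.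
  split; [exact Hcv|].
  destruct (Hcv p ltac:(lra)) as [N HN].
  exists (Nat.max N 1). intros m Hm a Ha.
  specialize (HN m ltac:(lia)). unfold R_dist in HN. rewrite Rminus_0_r in HN.
  pose proof (Rle_abs (1 * ell m / INR m)) as HA.
  destruct m as [|m']; [lia|].
  assert (Hp' : 0 < p < 1) by lra.
  assert (Hpinv : p * / p = 1) by (field; lra).
  assert (Hinv : / p <= 2).
  { apply Rmult_le_reg_l with p; [lra|]. nra. }
  assert (Hinv1 : 1 < / p).
  { apply Rmult_lt_reg_l with p; [lra|]. nra. }
  replace 1 with (exp (Phi p (/ p - 1))) at 1 by (rewrite Phi_mean, exp_0; auto).
  apply final_step with (q := p); auto; try lia; try lra.
  + split; [apply exp_pos|]. rewrite Phi_mean, exp_0; auto; lra.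
  + apply prob_ge_pm; auto; lra.
  + apply prob_lb; auto; lra.
  + apply ell_nonneg; lia.
Qed.
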